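(* Let $d,j$ be integers with $0<j<d$. Let $\lambda_1,\dots,\lambda_t$ be the elements of $\mathscr{P}_{3,d-1}(j)$ and $\mu_1,\dots,\mu_s$ the elements of $\mathscr{P}_{3,d-1}(j-1)$, and define the $s\times t$ matrix $C=(C_{pq})$ by $E([x^{\lambda_q}])=\sum_{p=1}^{s} C_{pq}[x^{\mu_p}]$. Then $\operatorname{rank} C = s = p_{3,d-1}(j-1)$.
   Context: $\Bbbk$ is an algebraically closed field of characteristic $0$. For an integer $d\ge 1$, $A(d)=\Bbbk[x_1,x_2,x_3]/(x_1^d,x_2^d,x_3^d)=\bigoplus_j A(d)_j$ with its standard grading; the monomials $x_1^{a_1}x_2^{a_2}x_3^{a_3}$ with $0\le a_i\le d-1$ form a basis. The linear map $E:A(d)_{j+1}\to A(d)_j$ is defined on monomials by $E(x_1^{a_1}x_2^{a_2}x_3^{a_3})=\sum_{k=1}^{3} a_k(d-a_k)\,x_1^{a_1}\cdots x_k^{a_k-1}\cdots x_3^{a_3}$ (terms with $a_k=0$ vanish). For integers $l\ge 0$ and $n$, $\mathscr{P}_{3,l}(n)$ is the set of integer triples $(a,b,c)$ with $l\ge a\ge b\ge c\ge 0$, $a+b+c=n$, and $p_{3,l}(n)=|\mathscr{P}_{3,l}(n)|$ (so $p_{3,l}(n)=0$ for $n<0$). For $\lambda=(a,b,c)$, $[x^\lambda]$ denotes the sum of the distinct monomials in the orbit of $x_1^ax_2^bx_3^c$ under the action of $S_3$ permuting the variables. *)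

(* Defs.v *)
From HB Require Import structures.
From mathcomp Require Import all_boot all_order all_algebra.
Unset Printing Implicit Defensive.
Import Order.TTheory GRing.Theory Num.Theory.
Local Open Scope ring_scope.

(* Exponent vectors of the monomial basis of A(d) = k[x1,x2,x3]/(x1^d,x2^d,x3^d):
   a : 'I_3 -> 'I_d  represents x1^(a 0) x2^(a 1) x3^(a 2). *)
Definition Mono (d : nat) := {ffun 'I_3 -> 'I_d}.

(* An element of A(d) is given by its coefficient function on the monomial basis. *)
Definition Alg (F : fieldType) (d : nat) := Mono d -> F.

(* The linear map E, defined on basis monomials by
   E(x^a) = sum_k a_k (d - a_k) x^(a - e_k)  (terms with a_k = 0 vanish),
   extended linearly: coefficient of x^m in E(f). *)
Definition E (F : fieldType) (d : nat) (f : Alg F d) : Alg F d :=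
  fun m => \sum_(a : Mono d) f a *
    \sum_(k < 3) (if [forall i, (a i : nat) == (m i + (i == k))%N]
                  then ((a k) * (d - a k))%:R else 0).

(* [x^lam]: the sum of the distinct monomials in the S_3-orbit of x1^a x2^b x3^c,
   i.e. the indicator of the exponent vectors that are rearrangements of (a,b,c). *)
Definition orbsum (F : fieldType) (d : nat) (lam : nat * nat * nat) : Alg F d :=
  fun m => if perm_eq [:: (m ord0 : nat); (m (inord 1) : nat); (m (inord 2) : nat)]
                      [:: lam.1.1; lam.1.2; lam.2]
           then 1 else 0.

Definition P3 (l n : nat) : seq (nat * nat * nat) :=
  [seq x <- [seq (ab, c) | ab <- [seq (a, b) | a <- iota 0 l.+1, b <- iota 0 l.+1],
                           c <- iota 0 l.+1]
   | [&& (x.1.1 <= l)%N, (x.1.2 <= x.1.1)%N, (x.2 <= x.1.2)%N & (x.1.1 + x.1.2 + x.2 == n)%N]].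

Definition p3 (l n : nat) : nat := size (P3 l n).

Definition isCmatrix (F : fieldType) (d j : nat)
  (C : 'M[F]_(size (P3 d.-1 j.-1), size (P3 d.-1 j))) : Prop :=
  forall (q : 'I_(size (P3 d.-1 j))) (m : Mono d),
    @E F d (orbsum F d (nth (0, 0, 0)%N (P3 d.-1 j) q)) m =
    \sum_(p < size (P3 d.-1 j.-1)) C p q * orbsum F d (nth (0, 0, 0)%N (P3 d.-1 j.-1) p) m.

(* Main.v *)
Require Import Defs.
From HB Require Import structures.
From mathcomp Require Import all_boot all_order all_algebra.
From mathcomp Require Import zify.
Import GRing.Theory.
Local Open Scope ring_scope.

Lemma pswap (T : eqType) (a b : T) s : perm_eq [:: a, b & s] [:: b, a & s].
Proof. by apply/permP => P /=; rewrite addnCA. Qed.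

Lemma prot (T : eqType) (a b c : T) : perm_eq [:: a; b; c] [:: c; a; b].
Proof. apply/permP => P /=; lia. Qed.

Lemma perm1 {x y : nat} : perm_eq [:: x] [:: y] -> x = y.
Proof. by move=> H; have := perm_mem H x; rewrite !inE eqxx => /esym/eqP. Qed.

Lemma perm2 {x y u v : nat} : perm_eq [:: x; y] [:: u; v] ->
  (x = u /\ y = v) \/ (x = v /\ y = u).
Proof.
move=> H; have := perm_mem H x; rewrite !inE eqxx /= => /esym/orP[]/eqP ex.
  by subst; rewrite perm_cons in H; left; split => //; apply: perm1.
subst; right; split => //; apply: perm1.
by rewrite -(perm_cons v); apply: (perm_trans H); apply: pswap.
Qed.

Lemma perm3 {x y z u v w : nat} : perm_eq [:: x; y; z] [:: u; v; w] ->
  (x = u /\ y = v /\ z = w) \/ (x = u /\ y = w /\ z = v) \/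
  (x = v /\ y = u /\ z = w) \/ (x = v /\ y = w /\ z = u) \/
  (x = w /\ y = u /\ z = v) \/ (x = w /\ y = v /\ z = u).
Proof.
move=> H; have := perm_mem H x; rewrite !inE eqxx /= => /esym/orP[/eqP ex|/orP[]/eqP ex]; subst.
- by rewrite perm_cons in H; case: (perm2 H) => [[-> ->]|[-> ->]]; tauto.
- have H' : perm_eq [:: v; y; z] [:: v; u; w] by apply: (perm_trans H); apply: pswap.
  by rewrite perm_cons in H'; case: (perm2 H') => [[-> ->]|[-> ->]]; tauto.
- have H' : perm_eq [:: w; y; z] [:: w; u; v] by apply: (perm_trans H); apply: prot.
  by rewrite perm_cons in H'; case: (perm2 H') => [[-> ->]|[-> ->]]; tauto.
Qed.
Definition bumpm {n : nat} (m : Mono n.+1) (k : 'I_3) : Mono n.+1 :=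
  [ffun i : 'I_3 => inord ((m i : nat) + (i == k))].

Lemma bumpmE n (m : Mono n.+1) (k i : 'I_3) : ((m k : nat).+1 < n.+1)%N ->
  (bumpm m k i : nat) = ((m i : nat) + (i == k))%N.
Proof.
move=> h; rewrite /bumpm ffunE inordK //.
by case: eqP => [->|_]; rewrite ?addn1 ?addn0.
Qed.

Lemma Eshift (F : fieldType) n (f : Alg F n.+1) (m : Mono n.+1) (k : 'I_3)
  (c : Mono n.+1 -> F) :
  \sum_(a : Mono n.+1) f a * (if [forall i, (a i : nat) == ((m i : nat) + (i == k))%N]
                               then c a else 0)
  = if ((m k : nat).+1 < n.+1)%N then f (bumpm m k) * c (bumpm m k) else 0.
Proof.
case h: ((m k : nat).+1 < n.+1)%N.
  rewrite (bigD1 (bumpm m k)) //=.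
  have -> : [forall i, (bumpm m k i : nat) == ((m i : nat) + (i == k))%N].
    by apply/forallP => i; rewrite bumpmE.
  rewrite big1 ?addr0 // => a ha.
  case: ifP; rewrite ?mulr0 // => /forallP hc.
  exfalso; move/negP: ha; apply; apply/eqP/ffunP => i; apply: val_inj.
  by rewrite /= bumpmE // (eqP (hc i)).
rewrite big1 // => a _; case: ifP; rewrite ?mulr0 // => /forallP/(_ k)/eqP.
by rewrite eqxx addn1 => hk; move: (ltn_ord (a k)); rewrite hk h.
Qed.

Definition lst (t : nat * nat * nat) := [:: t.1.1; t.1.2; t.2].

Definition G (d : nat) (lam : nat * nat * nat) (x0 x1 x2 : nat) : nat :=
  ((if (x0.+1 < d) && perm_eq [:: x0.+1; x1; x2] (lst lam) then x0.+1 * (d - x0.+1) else 0)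
+ (if (x1.+1 < d) && perm_eq [:: x0; x1.+1; x2] (lst lam) then x1.+1 * (d - x1.+1) else 0)
+ (if (x2.+1 < d) && perm_eq [:: x0; x1; x2.+1] (lst lam) then x2.+1 * (d - x2.+1) else 0))%N.

Lemma i1 : (inord 1 : 'I_3) = lift ord0 ord0.
Proof. by apply: val_inj; rewrite /= inordK. Qed.
Lemma i2 : (inord 2 : 'I_3) = lift ord0 (lift ord0 ord0).
Proof. by apply: val_inj; rewrite /= inordK. Qed.

Lemma Eform (F : fieldType) n lam (m : Mono n.+1) :
  E F n.+1 (orbsum F n.+1 lam) m = (G n.+1 lam (m ord0) (m (inord 1)) (m (inord 2)))%:R.
Proof.
rewrite /E; under eq_bigr do rewrite mulr_sumr.
rewrite exchange_big /=.
under eq_bigr => k _ do rewrite (Eshift _ _ _ _ _ (fun a : Mono n.+1 => ((a k : nat) * (n.+1 - a k))%:R)).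
rewrite !big_ord_recl big_ord0 addr0 /G !natrD /orbsum i1 i2.
rewrite addrA; congr (_ + _ + _);
  [case h: ((m ord0 : nat).+1 < n.+1)%N|case h: ((m (lift ord0 ord0) : nat).+1 < n.+1)%N
  |case h: ((m (lift ord0 (lift ord0 ord0)) : nat).+1 < n.+1)%N] => //=;
  rewrite !bumpmE //= ?addn0 ?addn1; case: ifP => _; by rewrite ?mul1r ?mul0r.
Qed.
Lemma pswap12 (a b c : nat) : perm_eq [:: a; b; c] [:: a; c; b].
Proof. by rewrite perm_cons pswap. Qed.

Lemma Gsym01 d lam x0 x1 x2 : G d lam x1 x0 x2 = G d lam x0 x1 x2.
Proof.
rewrite /G (permPl (pswap _ x1.+1 x0 [:: x2])) (permPl (pswap _ x1 x0.+1 [:: x2]))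
  (permPl (pswap _ x1 x0 [:: x2.+1])).
by rewrite [X in (X + _)%N]addnC.
Qed.

Lemma Gsym12 d lam x0 x1 x2 : G d lam x0 x2 x1 = G d lam x0 x1 x2.
Proof.
rewrite /G (permPl (pswap12 x0.+1 x2 x1)) (permPl (pswap12 x0 x2.+1 x1))
  (permPl (pswap12 x0 x2 x1.+1)).
by rewrite addnAC.
Qed.

Lemma Gperm d lam x0 x1 x2 y0 y1 y2 : perm_eq [:: x0; x1; x2] [:: y0; y1; y2] ->
  G d lam x0 x1 x2 = G d lam y0 y1 y2.
Proof.
move/perm3 => [[-> [-> ->]]|[[-> [-> ->]]|[[-> [-> ->]]|[[-> [-> ->]]|[[-> [-> ->]]|[-> [-> ->]]]]]]].
- by [].
- by rewrite Gsym12.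
- by rewrite Gsym01.
- by rewrite Gsym12 Gsym01.
- by rewrite Gsym01 Gsym12.
- by rewrite Gsym01 Gsym12 Gsym01.
Qed.

Lemma perm3sum {x y z u v w : nat} : perm_eq [:: x; y; z] [:: u; v; w] ->
  (x + y + z = u + v + w)%N.
Proof. move/perm3; lia. Qed.

Lemma Gsum d lam x0 x1 x2 : (0 < G d lam x0 x1 x2)%N ->
  (x0 + x1 + x2).+1 = (lam.1.1 + lam.1.2 + lam.2)%N.
Proof.
rewrite /G /lst; case: ifP => [/andP[_ /perm3sum]|_]; [lia|].
case: ifP => [/andP[_ /perm3sum]|_]; [lia|].
case: ifP => [/andP[_ /perm3sum]|_]; lia.
Qed.

Lemma Gtri d a b c a' b' c' : (c <= b <= a)%N -> (c' <= b' <= a')%N ->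
  (a' + b' + c' = a + b + c)%N -> (0 < G d (a.+1, b, c) a' b' c')%N ->
  (a' = a /\ b' = b /\ c' = c) \/ (a < a')%N.
Proof.
move=> /andP[h1 h2] /andP[h3 h4] hs; rewrite /G /lst /=.
case: ifP => [/andP[_ /perm3]|_]; [lia|].
case: ifP => [/andP[_ /perm3]|_]; [lia|].
case: ifP => [/andP[_ /perm3]|_]; lia.
Qed.

Lemma Gpos d a b c : (a.+1 < d)%N -> (0 < G d (a.+1, b, c) a b c)%N.
Proof.
move=> h; rewrite /G /lst /= h perm_refl /=.
have : (0 < a.+1 * (d - a.+1))%N by rewrite muln_gt0 subn_gt0 h.
lia.
Qed.

Lemma mem_P3 l n x : (x \in P3 l n) =
  [&& (x.1.1 <= l)%N, (x.1.2 <= x.1.1)%N, (x.2 <= x.1.2)%N & (x.1.1 + x.1.2 + x.2 == n)%N].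
Proof.
rewrite /P3 mem_filter.
apply/andP/idP => [[]//|H]; split => //.
move: H; case: x => [[a b] c] /and4P [h1 h2 h3 _].
rewrite /= in h1 h2 h3.
apply: (allpairs_f (fun ab c => (ab, c))); last by rewrite mem_iota; lia.
apply: (allpairs_f (fun a b => (a, b))); rewrite mem_iota; lia.
Qed.

Lemma uniq_P3 l n : uniq (P3 l n).
Proof.
rewrite /P3 filter_uniq //; apply: allpairs_uniq; rewrite ?iota_uniq //.
  apply: allpairs_uniq; rewrite ?iota_uniq //.
  by move=> [x1 x2] [y1 y2] _ _ /= [-> ->].
by move=> [x1 x2] [y1 y2] _ _ /= [-> ->].
Qed.

Lemma P3_perm {l k mu mu'} : mu \in P3 l k -> mu' \in P3 l k ->
  perm_eq (lst mu) (lst mu') -> mu = mu'.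
Proof.
case: mu => [[a b] c]; case: mu' => [[a' b'] c'].
rewrite !mem_P3 /lst /= => /and4P[h1 h2 h3 /eqP h4] /and4P[h1' h2' h3' /eqP h4'] /perm3 H.
have [-> [-> ->]] : a = a' /\ b = b' /\ c = c' by lia.
by [].
Qed.

Definition mono {n : nat} (mu : nat * nat * nat) : Mono n.+1 :=
  [ffun i : 'I_3 => inord (nth 0%N (lst mu) i)].

Lemma monoE {n} {mu : nat * nat * nat} : (mu.1.1 <= n)%N -> (mu.1.2 <= n)%N -> (mu.2 <= n)%N ->
  [/\ (@mono n mu ord0 : nat) = mu.1.1, (@mono n mu (inord 1) : nat) = mu.1.2
    & (@mono n mu (inord 2) : nat) = mu.2].
Proof. by move=> h1 h2 h3; rewrite i1 i2 /mono !ffunE /= !inordK. Qed.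

Lemma P3_le {n k mu} : mu \in P3 n k -> [/\ (mu.1.1 <= n)%N, (mu.1.2 <= n)%N & (mu.2 <= n)%N].
Proof. case: mu => [[a b] c]; rewrite mem_P3 /= => /and4P[h1 h2 h3 _]; split; lia. Qed.

Lemma orbsum_mono (F : fieldType) n k mu mu' : mu \in P3 n k -> mu' \in P3 n k ->
  orbsum F n.+1 mu' (@mono n mu) = if mu' == mu then 1 else 0.
Proof.
move=> hm hm'; have [h1 h2 h3] := P3_le hm.
have [e1 e2 e3] := monoE h1 h2 h3.
rewrite /orbsum e1 e2 e3.
case: eqP => [->|ne]; first by rewrite perm_refl.
case: ifP => // hp; exfalso; apply: ne; symmetry; exact: (P3_perm hm hm' hp).
Qed.

Lemma orbsumE (F : fieldType) d lam (m : Mono d) : orbsum F d lam m =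
  if perm_eq [:: (m ord0 : nat); (m (inord 1) : nat); (m (inord 2) : nat)] (lst lam)
  then 1 else 0.
Proof. by []. Qed.

Lemma nth_inj {n k} {p p' : 'I_(size (P3 n k))} :
  nth (0,0,0)%N (P3 n k) p = nth (0,0,0)%N (P3 n k) p' -> p = p'.
Proof.
move=> e; apply: val_inj; apply/eqP.
by rewrite -(nth_uniq (0,0,0)%N (ltn_ord p) (ltn_ord p') (uniq_P3 n k)) e.
Qed.

Theorem lemma3p2 (F : closedFieldType) (hF : [pchar F] =i pred0) (d j : nat)
  (hj0 : (0 < j)%N) (hjd : (j < d)%N) :
  (exists C, @isCmatrix F d j C) /\
  (forall C, @isCmatrix F d j C ->
     \rank C = size (P3 d.-1 j.-1) /\ size (P3 d.-1 j.-1) = p3 d.-1 j.-1).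
Proof.
have hF0 := (pcharf0P F).1 hF.
case: d hjd => [//|n] hjd.
split.
  exists (\matrix_(p, q) (G n.+1 (nth (0,0,0)%N (P3 n j) q)
     (nth (0,0,0)%N (P3 n j.-1) p).1.1 (nth (0,0,0)%N (P3 n j.-1) p).1.2
     (nth (0,0,0)%N (P3 n j.-1) p).2)%:R).
  move=> q m; rewrite Eform.
  under eq_bigr do rewrite orbsumE.
  set x0 := (m ord0 : nat); set x1 := (m (inord 1) : nat); set x2 := (m (inord 2) : nat).
  case: (boolP [exists p : 'I_(size (P3 n j.-1)),
                perm_eq [:: x0; x1; x2] (lst (nth (0,0,0)%N (P3 n j.-1) p))]).
    move=> /existsP [p hp].
    rewrite (bigD1 p) //= big1 ?addr0; last first.
      move=> p' hp'; case: ifP => hp2; last by rewrite mulr0.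
      have h : perm_eq (lst (nth (0,0,0)%N (P3 n j.-1) p)) (lst (nth (0,0,0)%N (P3 n j.-1) p')).
        by apply: perm_trans hp2; rewrite perm_sym.
      have e := P3_perm (mem_nth (0,0,0)%N (ltn_ord p)) (mem_nth (0,0,0)%N (ltn_ord p')) h.
      by move: hp'; rewrite (nth_inj e) eqxx.
    rewrite mxE hp mulr1; congr (_%:R); exact: Gperm.
  rewrite negb_exists => /forallP hn.
  rewrite big1; last by move=> p _; rewrite (negbTE (hn p)) mulr0.
  case hG: (G n.+1 (nth (0, 0, 0)%N (P3 n j) q) x0 x1 x2 == 0)%N; first by rewrite (eqP hG).
  exfalso.
  have hpos : (0 < G n.+1 (nth (0, 0, 0)%N (P3 n j) q) x0 x1 x2)%N by rewrite lt0n hG.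
  have hs := Gsum _ _ _ _ _ hpos.
  have := mem_nth (0,0,0)%N (ltn_ord q); change (n.+1.-1) with n; rewrite mem_P3 => /and4P[_ _ _ /eqP hq].
  have hx0 : (x0 < n.+1)%N by apply: ltn_ord.
  have hx1 : (x1 < n.+1)%N by apply: ltn_ord.
  have hx2 : (x2 < n.+1)%N by apply: ltn_ord.
  have hsz := size_sort geq [:: x0; x1; x2].
  have hperm := permEl (perm_sort geq [:: x0; x1; x2]).
  have hsort : sorted geq (sort geq [:: x0; x1; x2]).
    by apply: sort_sorted => a b; apply: leq_total.
  move: hsz hperm hsort.
  case: (sort geq [:: x0; x1; x2]) => [|u [|v [|w [|z r]]]] //= _ hperm /andP[hu /andP[hv _]].
  have hmem : (u, v, w) \in P3 n j.-1.
    have hp3 := perm3 hperm; have hsj : (x0 + x1 + x2).+1 = j by rewrite hs hq.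
    clear hs hq; rewrite mem_P3 /=.
    apply/and4P; split; try lia; apply/eqP; rewrite -subn1; lia.
  have hi : (index (u, v, w) (P3 n j.-1) < size (P3 n j.-1))%N by rewrite index_mem.
  move: (hn (Ordinal hi)); rewrite /= nth_index //= perm_sym.
  by rewrite /lst /= hperm.
move=> C hC; split; last by [].
have Cval : forall p q, C p q = (G n.+1 (nth (0,0,0)%N (P3 n j) q)
     (nth (0,0,0)%N (P3 n j.-1) p).1.1 (nth (0,0,0)%N (P3 n j.-1) p).1.2
     (nth (0,0,0)%N (P3 n j.-1) p).2)%:R.
  move=> p q; have := hC q (mono (nth (0,0,0)%N (P3 n j.-1) p)).
  have hmp : nth (0,0,0)%N (P3 n j.-1) p \in P3 n j.-1 := mem_nth (0,0,0)%N (ltn_ord p).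
  rewrite (bigD1 p) //= big1 ?addr0; last first.
    move=> p' hp'; rewrite (orbsum_mono _ _ _ _ _ hmp (mem_nth (0,0,0)%N (ltn_ord p'))).
    case: eqP => [e|_]; last by rewrite mulr0.
    by move: hp'; rewrite (nth_inj e) eqxx.
  rewrite (orbsum_mono _ _ _ _ _ hmp hmp) eqxx mulr1 => <-.
  rewrite Eform; have [h1 h2 h3] := P3_le hmp; have [e1 e2 e3] := monoE h1 h2 h3.
  by rewrite e1 e2 e3.
apply/eqP; apply: inj_row_free => v hv; apply/rowP => p; rewrite mxE.
suff H : forall k (p : 'I_(size (P3 n j.-1))),
    (n - (nth (0,0,0)%N (P3 n j.-1) p).1.1 < k)%N -> v 0 p = 0.
  by apply: (H n.+1); lia.
elim=> [//|k IH] {}p hk.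
have hm := mem_nth (0,0,0)%N (ltn_ord p).
move: hk hm; case emu: (nth (0,0,0)%N (P3 n j.-1) p) => [[a b] c] /= hk.
rewrite mem_P3 /= => /and4P[ha hb hc /eqP hsum].
have hl : (a.+1, b, c) \in P3 n j by rewrite mem_P3 /=; apply/and4P; split; try lia; apply/eqP; lia.
have hi : (index (a.+1, b, c) (P3 n j) < size (P3 n j))%N by rewrite index_mem.
have hq : nth (0,0,0)%N (P3 n j) (Ordinal hi) = (a.+1, b, c) by apply: nth_index.
have := congr1 (fun M : 'M[F]_(1, size (P3 n.+1.-1 j)) => M 0 (Ordinal hi)) hv; rewrite !mxE (bigD1 p) //= big1 ?addr0.
  rewrite Cval hq emu /= => /eqP; rewrite mulf_eq0 hF0.
  have hg : (G n.+1 (a.+1, b, c) a b c == 0)%N = false.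
    by apply/negbTE; rewrite -lt0n; apply: Gpos; lia.
  by rewrite hg orbF => /eqP.
move=> p' hp'; rewrite Cval hq.
case hG: (G n.+1 (a.+1, b, c) (nth (0,0,0)%N (P3 n j.-1) p').1.1
   (nth (0,0,0)%N (P3 n j.-1) p').1.2 (nth (0,0,0)%N (P3 n j.-1) p').2 == 0)%N.
  by rewrite (eqP hG) mulr0.
move/negbT: hG; rewrite -lt0n => hpos.
have hm' := mem_nth (0,0,0)%N (ltn_ord p').
move: hpos hm' (IH p'); case emu': (nth (0,0,0)%N (P3 n j.-1) p') => [[a' b'] c'] /= hpos.
rewrite mem_P3 /= => /and4P[ha' hb' hc' /eqP hsum'] IH'.
have [[e1 [e2 e3]]|lt] := Gtri n.+1 a b c a' b' c' ltac:(apply/andP; split; lia) ltac:(apply/andP; split; lia)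
  ltac:(lia) hpos.
  by move: hp'; subst; rewrite (nth_inj (etrans emu' (esym emu))) eqxx.
by rewrite IH' ?mul0r //; lia.
Qed.
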